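(* Let $m$ be an integer. (i) If $m=N_1(1+(x-1)^3h(x))$ for some $h\in\mathbb Z[x]$ with $5\nmid h(1)$, then there is $F\in\mathbb Z[x]$ with $M_{25}(F)=5^3m$, $F(1)=N_2(F)=5$ and $N_1(F)=5m$. (ii) If $m=N_2(1+(x-1)^3h(x))$ for some $h\in\mathbb Z[x]$ with $5\nmid h(1)$, then there is $F\in\mathbb Z[x]$ with $M_{25}(F)=5^3m$, $F(1)=N_1(F)=5$ and $N_2(F)=5m$.
   Context: $M_{25}(F)=\prod_{z^{25}=1}F(z)$. For $k\geq1$, $\omega_k=e^{2\pi i/5^k}$ and $N_k(F)=\prod_{1\leq j\leq 5^k,\ 5\nmid j}F(\omega_k^j)$. *)

(* Defs.v *)
From mathcomp Require Import all_boot all_order all_algebra all_field.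
Set Implicit Arguments. Unset Strict Implicit. Unset Printing Implicit Defensive.
Import Order.TTheory GRing.Theory Num.Theory.
Local Open Scope ring_scope.

Definition evC (F : {poly int}) (z : algC) : algC :=
  (map_poly (fun a : int => a%:~R) F).[z].

Lemma five_pow_gt0 (k : nat) : (0 < 5 ^ k)%N.
Proof. by rewrite expn_gt0. Qed.

(* A fixed primitive 5^k-th root of unity in algC (stands for e^{2 pi i/5^k};
   the products below do not depend on which primitive root is chosen). *)
Definition omega (k : nat) : algC := sval (C_prim_root_exists (five_pow_gt0 k)).

(* M_25(F) = prod_{z^25 = 1} F(z) : the 25th roots of unity are omega 2 ^+ j, j < 25. *)
Definition M25 (F : {poly int}) : algC := \prod_(j < 25) evC F (omega 2 ^+ j).

Definition Nk (k : nat) (F : {poly int}) : algC :=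
  \prod_(j < 5 ^ k | ~~ (5 %| j)%N) evC F (omega k ^+ j).

(* Main.v *)
Require Import Defs.
From mathcomp Require Import all_boot all_order all_algebra all_field.
From mathcomp Require Import ring zify.
Import Order.TTheory GRing.Theory Num.Theory.
Local Open Scope ring_scope.

Definition NN (n : nat) (z : algC) (g : algC -> algC) : algC :=
  \prod_(k < n | coprime k n) g (z ^+ k).

Lemma NN_eq n z f g : n.-primitive_root z ->
  (forall y, n.-primitive_root y -> f y = g y) -> NN n z f = NN n z g.
Proof.
move=> pz H; apply: eq_bigr => k ck; apply: H; by rewrite prim_root_exp_coprime.
Qed.

Lemma NN_mul n z f g : NN n z (fun y => f y * g y) = NN n z f * NN n z g.
Proof. exact: big_split. Qed.

Lemma NN_reindex n z e g : n.-primitive_root z -> coprime e n ->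
  NN n z (fun y => g (y ^+ e)) = NN n z g.
Proof.
move=> pz co_e_n; have n_gt0 := prim_order_gt0 pz.
pose f e (k : 'I_n) := Ordinal (ltn_pmod (k * e) n_gt0).
have injf: injective (f e).
  apply: can_inj (f (egcdn e n).1) _ => k; apply: val_inj => /=.
  rewrite modnMml -mulnA -modnMmr -{1}(mul1n e).
  by rewrite (chinese_modr co_e_n 0) modnMmr muln1 modn_small.
rewrite /NN [RHS](reindex_inj injf); apply: eq_big => k /=.
  by rewrite coprime_modl coprimeMl co_e_n andbT.
by rewrite prim_expr_mod // exprM.
Qed.

Lemma NN_indep n z z' g : n.-primitive_root z -> n.-primitive_root z' ->
  NN n z g = NN n z' g.
Proof.
move=> pz pz'; have [e De] := prim_rootP pz (prim_expr_order pz').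
have co: coprime e n by rewrite -(prim_root_exp_coprime e pz) -De.
rewrite -(@NN_reindex n z e g pz co) /NN; apply: eq_bigr => k _.
by rewrite De exprAC.
Qed.

Lemma NN_1sub n z : n.-primitive_root z ->
  NN n z (fun y => 1 - y) = (('Phi_n).[1])%:~R.
Proof.
move=> pz; have := Cintr_Cyclotomic pz.
move/(congr1 (fun p => p.[1])).
rewrite -[X in _.[X] = _](rmorph1 (intr : int -> algC)) horner_map /=.
rewrite /cyclotomic horner_prod => ->; apply: eq_bigr => k _.
by rewrite hornerXsubC.
Qed.

Lemma Phi1E : 'Phi_1 = 'X - 1 :> {poly int}.
Proof. by have := prod_Cyclotomic (isT : (0 < 1)%N); rewrite big_seq1 expr1. Qed.

Lemma Phi5_1 : ('Phi_5).[1] = 5 :> int.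
Proof.
have := prod_Cyclotomic (isT : (0 < 5)%N).
have -> : divisors 5 = [:: 1; 5]%N by [].
rewrite big_cons big_seq1 Phi1E subrX1 => /mulfI.
have nz : ('X - 1 : {poly int}) != 0 by rewrite monic_neq0 ?monicXsubC.
move=> /(_ nz) ->; rewrite horner_sum.
under eq_bigr do rewrite hornerXn expr1n.
by rewrite sumr_const card_ord.
Qed.

Lemma Phi5E : 'Phi_1 * 'Phi_5 = 'X^5 - 1 :> {poly int}.
Proof.
have := prod_Cyclotomic (isT : (0 < 5)%N).
have -> : divisors 5 = [:: 1; 5]%N by [].
by rewrite big_cons big_seq1.
Qed.

Lemma Phi25_1 : ('Phi_25).[1] = 5 :> int.
Proof.
have := prod_Cyclotomic (isT : (0 < 25)%N).
have -> : divisors 25 = [:: 1; 5; 25]%N by [].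
rewrite big_cons big_cons big_seq1 mulrA Phi5E.
have -> : ('X^25 : {poly int}) = ('X^5)^+5 by rewrite -exprM.
rewrite (subrX1 ('X^5) 5) => /mulfI.
have nz : ('X^5 - 1 : {poly int}) != 0 by rewrite monic_neq0 ?monicXnsubC.
move=> /(_ nz) ->; rewrite horner_sum.
under eq_bigr do rewrite horner_exp hornerXn !expr1n.
by rewrite sumr_const card_ord.
Qed.

Lemma coprime5 j : coprime j 5 = ~~ (5 %| j)%N.
Proof. by rewrite coprime_sym prime_coprime. Qed.

Lemma coprime25 j : coprime j 25 = ~~ (5 %| j)%N.
Proof. by rewrite (_ : 25 = 5 ^ 2)%N // coprime_pexpr // coprime5. Qed.

Lemma split25 (g : nat -> algC) :
  \prod_(j < 25) g j =
  g 0%N * \prod_(i < 5 | coprime i 5) g (5 * i)%N * \prod_(j < 25 | coprime j 25) g j.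
Proof.
rewrite (bigID (fun j : 'I_25 => 5 %| j)%N) /=; congr (_ * _); last first.
  by apply: eq_bigl => j; rewrite coprime25.
rewrite (reindex_onto (fun i : 'I_5 => inord (5 * i) : 'I_25)
                      (fun j : 'I_25 => inord (j %/ 5) : 'I_5)); last first.
  move=> j dj; apply: val_inj => /=.
  have hj := ltn_ord j.
  have e1 : nat_of_ord (inord (j %/ 5) : 'I_5) = (j %/ 5)%N.
    by rewrite inordK //; lia.
  rewrite e1 inordK; first by rewrite mulnC divnK.
  by lia.
have -> : \big[*%R/1]_(j : 'I_5 | (5 %| (inord (5 * j) : 'I_25))%N &&
          ((inord ((inord (5 * j) : 'I_25) %/ 5) : 'I_5) == j))
    g (inord (5 * j) : 'I_25) = \prod_(i < 5) g (5 * i)%N.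
  apply: eq_big => i.
    have hi := ltn_ord i.
    have e : nat_of_ord (inord (5 * i) : 'I_25) = (5 * i)%N.
      by rewrite (@inordK 24 (5 * i)) //; lia.
    rewrite e dvdn_mulr // mulKn //=; by apply/eqP/val_inj; rewrite /= inordK.
  move=> _; have hi := ltn_ord i.
  have e : nat_of_ord (inord (5 * i) : 'I_25) = (5 * i)%N.
    by rewrite (@inordK 24 (5 * i)) //; lia.
  by rewrite e.
rewrite (bigD1 ord0) //=; congr (_ * _).
apply: eq_bigl => i.
by case: i => [[|[|[|[|[|]]]]] ?].
Qed.

Lemma prim_omega1 : 5.-primitive_root (omega 1).
Proof. exact: (svalP (C_prim_root_exists (five_pow_gt0 1))). Qed.

Lemma prim_omega2 : 25.-primitive_root (omega 2).
Proof. exact: (svalP (C_prim_root_exists (five_pow_gt0 2))). Qed.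

Lemma Nk1E F : Nk 1 F = NN 5 (omega 1) (evC F).
Proof. by apply: eq_bigl => j; rewrite coprime5. Qed.

Lemma Nk2E F : Nk 2 F = NN 25 (omega 2) (evC F).
Proof. by apply: eq_bigl => j; rewrite coprime25. Qed.

Lemma evC1E F : evC F 1 = (F.[1])%:~R.
Proof.
by rewrite /evC -[X in _.[X] = _](rmorph1 (intr : int -> algC)) horner_map.
Qed.

Lemma M25E F : M25 F = (F.[1])%:~R * NN 5 (omega 1) (evC F) * NN 25 (omega 2) (evC F).
Proof.
rewrite /M25 (split25 (fun j => evC F (omega 2 ^+ j))) expr0 evC1E.
congr (_ * _ * _).
have p5 : 5.-primitive_root (omega 2 ^+ 5).
  by have := exp_prim_root prim_omega2 5.
rewrite -(@NN_indep _ _ _ (evC F) p5 prim_omega1) /NN.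
by apply: eq_bigr => i _; rewrite exprM.
Qed.

Lemma prim5_facts (y : algC) : 5.-primitive_root y ->
  y ^+ 5 = 1 /\ 1 + y + y ^+ 2 + y ^+ 3 + y ^+ 4 = 0.
Proof.
move=> py; have e := prim_expr_order py; split => //.
have ne : y - 1 != 0.
  by rewrite subr_eq0 -[y in y == _]expr1 -(prim_order_dvd py).
have : (y - 1) * (1 + y + y ^+ 2 + y ^+ 3 + y ^+ 4) = 0.
  by rewrite -[RHS](subrr 1) -[X in _ = X - _]e; ring.
by move/eqP; rewrite mulf_eq0 (negPf ne) => /eqP.
Qed.

Lemma prim25_facts (y : algC) : 25.-primitive_root y ->
  y ^+ 25 = 1 /\ 1 + y ^+ 5 + y ^+ 10 + y ^+ 15 + y ^+ 20 = 0.
Proof.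
move=> py; have e := prim_expr_order py; split => //.
have ne : y ^+ 5 - 1 != 0.
  by rewrite subr_eq0 -(prim_order_dvd py).
have : (y ^+ 5 - 1) * (1 + y ^+ 5 + y ^+ 10 + y ^+ 15 + y ^+ 20) = 0.
  by rewrite -[RHS](subrr 1) -[X in _ = X - _]e; ring.
by move/eqP; rewrite mulf_eq0 (negPf ne) => /eqP.
Qed.

Section EvC.
Variables (p q : {poly int}) (z : algC).
Lemma evCD : evC (p + q) z = evC p z + evC q z.
Proof. by rewrite /evC rmorphD hornerD. Qed.
Lemma evCN : evC (- p) z = - evC p z.
Proof. by rewrite /evC rmorphN hornerN. Qed.
Lemma evCM : evC (p * q) z = evC p z * evC q z.
Proof. by rewrite /evC rmorphM hornerM. Qed.
Lemma evCX : evC 'X z = z.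
Proof. by rewrite /evC map_polyX hornerX. Qed.
Lemma evCXn n : evC 'X^n z = z ^+ n.
Proof. by rewrite /evC map_polyXn hornerXn. Qed.
Lemma evC1 : evC 1 z = 1.
Proof. by rewrite /evC rmorph1 hornerE. Qed.
Lemma evCC c : evC c%:P z = c%:~R.
Proof. by rewrite /evC map_polyC hornerC. Qed.
Lemma evCMn n : evC (p *+ n) z = evC p z *+ n.
Proof. by rewrite /evC rmorphMn hornerMn. Qed.
Lemma evCexp n : evC (p ^+ n) z = evC p z ^+ n.
Proof. by rewrite /evC rmorphXn horner_exp. Qed.
Lemma evCcomp : evC (p \Po q) z = evC p (evC q z).
Proof. by rewrite /evC map_comp_poly horner_comp. Qed.
End EvC.

Lemma evCsum n (f : nat -> {poly int}) z :
  evC (\sum_(i < n) f i) z = \sum_(i < n) evC (f i) z.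
Proof. by rewrite /evC rmorph_sum horner_sum. Qed.

Definition evCE := (evCD, evCN, evCM, evCX, evCXn, evC1, evCC, evCMn, evCexp, evCcomp, evCsum).

Definition Phi5p : {poly int} := 1 + 'X + 'X^2 + 'X^3 + 'X^4.
Definition Phi25p : {poly int} := 1 + 'X^5 + 'X^10 + 'X^15 + 'X^20.
Definition P1 : {poly int} := - 'X + 'X^2 - 'X^3.
Definition P2 : {poly int} :=
  1 - 'X *+ 4 + 'X^2 *+ 8 - 'X^3 *+ 8 + 'X^4 *+ 4 - 'X^6 *+ 3 + 'X^7 *+ 6
  - 'X^8 *+ 6 + 'X^9 *+ 3 - 'X^11 *+ 2 + 'X^12 *+ 4 - 'X^13 *+ 4 + 'X^14 *+ 2
  - 'X^16 + 'X^17 *+ 2 - 'X^18 *+ 2 + 'X^19.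
Definition Sa (a : nat) : {poly int} := \sum_(i < a) 'X^i.
Definition Gp (h : {poly int}) : {poly int} := 1 + ('X - 1) ^+ 3 * h.
Definition F1 h a k : {poly int} :=
  (1 - 'X) + Phi25p * (- (P1 * Sa a ^+ 3 * (h \Po 'X^a)) + k%:P * Phi5p).
Definition F2 h a k : {poly int} :=
  (1 - 'X) + Phi5p * (- (P2 * Sa a ^+ 3 * (h \Po 'X^a)) + k%:P * Phi25p).

Lemma E1a h a k (y : algC) : y ^+ 5 = 1 -> 1 + y + y ^+ 2 + y ^+ 3 + y ^+ 4 = 0 ->
  evC (F1 h a k) y = (1 - y) * evC (Gp h) (y ^+ a).
Proof.
move=> y5 H5.
rewrite /F1 /Gp /Phi25p /Phi5p /P1 /Sa !evCE.
under eq_bigr do rewrite evCXn.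
rewrite (subrX1 y a).
set s := \sum_(i < a) y ^+ i; set w := evC h (y ^+ a); set kk : algC := k%:~R.
have H25 : 1 + y ^+ 5 + y ^+ 10 + y ^+ 15 + y ^+ 20 = 5 :> algC.
  have -> : y ^+ 10 = (y ^+ 5) ^+ 2 by rewrite -exprM.
  have -> : y ^+ 15 = (y ^+ 5) ^+ 3 by rewrite -exprM.
  have -> : y ^+ 20 = (y ^+ 5) ^+ 4 by rewrite -exprM.
  rewrite y5 !expr1n; ring.
rewrite H25; clearbody s w kk; apply/eqP; rewrite -subr_eq0; apply/eqP.
transitivity ((1 + y + y ^+ 2 + y ^+ 3 + y ^+ 4) * (s ^+ 3 * w + 5 * kk)).
  ring.
by rewrite H5 mul0r.
Qed.

Lemma E1b h a k (y : algC) : 1 + y ^+ 5 + y ^+ 10 + y ^+ 15 + y ^+ 20 = 0 ->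
  evC (F1 h a k) y = 1 - y.
Proof. by move=> H; rewrite /F1 /Phi25p evCD evCM !evCE H mul0r addr0. Qed.

Lemma E2b h a k (y : algC) : 1 + y + y ^+ 2 + y ^+ 3 + y ^+ 4 = 0 ->
  evC (F2 h a k) y = 1 - y.
Proof. by move=> H; rewrite /F2 /Phi5p evCD evCM !evCE H mul0r addr0. Qed.

Lemma P2id (y : algC) :
  (1 - y) ^+ 4 - (1 + y + y ^+ 2 + y ^+ 3 + y ^+ 4) *
  (1 - y *+ 4 + y ^+ 2 *+ 8 - y ^+ 3 *+ 8 + y ^+ 4 *+ 4 - y ^+ 6 *+ 3 + y ^+ 7 *+ 6
  - y ^+ 8 *+ 6 + y ^+ 9 *+ 3 - y ^+ 11 *+ 2 + y ^+ 12 *+ 4 - y ^+ 13 *+ 4 + y ^+ 14 *+ 2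
  - y ^+ 16 + y ^+ 17 *+ 2 - y ^+ 18 *+ 2 + y ^+ 19)
  = (1 + y ^+ 5 + y ^+ 10 + y ^+ 15 + y ^+ 20) * (- y + y ^+ 2 - y ^+ 3).
Proof. ring. Qed.

Lemma evP2 (y : algC) : evC P2 y =
  (1 - y *+ 4 + y ^+ 2 *+ 8 - y ^+ 3 *+ 8 + y ^+ 4 *+ 4 - y ^+ 6 *+ 3 + y ^+ 7 *+ 6
  - y ^+ 8 *+ 6 + y ^+ 9 *+ 3 - y ^+ 11 *+ 2 + y ^+ 12 *+ 4 - y ^+ 13 *+ 4 + y ^+ 14 *+ 2
  - y ^+ 16 + y ^+ 17 *+ 2 - y ^+ 18 *+ 2 + y ^+ 19).
Proof. by rewrite /P2 !evCE. Qed.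

Lemma evPhi5 (y : algC) : evC Phi5p y = 1 + y + y ^+ 2 + y ^+ 3 + y ^+ 4.
Proof. by rewrite /Phi5p !evCE. Qed.
Lemma evPhi25 (y : algC) : evC Phi25p y = 1 + y ^+ 5 + y ^+ 10 + y ^+ 15 + y ^+ 20.
Proof. by rewrite /Phi25p !evCE. Qed.

Lemma E2a h a k (y : algC) : 1 + y ^+ 5 + y ^+ 10 + y ^+ 15 + y ^+ 20 = 0 ->
  evC (F2 h a k) y = (1 - y) * evC (Gp h) (y ^+ a).
Proof.
move=> H25.
rewrite /F2 evCD evCM [evC (- _ + _) y]evCD evCN !evCM evPhi5 evPhi25.
have Hp := P2id y; rewrite -evP2 in Hp; move: (evC P2 y) Hp => p2 Hp.
rewrite /Gp /Sa !evCE.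
under eq_bigr do rewrite evCXn.
rewrite (subrX1 y a).
move: (\sum_(i < a) y ^+ i : algC) (evC h (y ^+ a)) (k%:~R : algC) => s w kk.
apply/eqP; rewrite -subr_eq0; apply/eqP.
transitivity ((1 + y ^+ 5 + y ^+ 10 + y ^+ 15 + y ^+ 20) *
   (kk * (1 + y + y ^+ 2 + y ^+ 3 + y ^+ 4)) +
   s ^+ 3 * w * ((1 - y) ^+ 4 - (1 + y + y ^+ 2 + y ^+ 3 + y ^+ 4) * p2)).
  ring.
by rewrite Hp H25 !mul0r mulr0 addr0.
Qed.

Lemma Sa1 a : (Sa a).[1] = a%:R.
Proof.
rewrite /Sa horner_sum; under eq_bigr do rewrite hornerXn expr1n.
by rewrite sumr_const card_ord.
Qed.

Lemma comp1 (h : {poly int}) a : (h \Po 'X^a).[1] = h.[1].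
Proof. by rewrite horner_comp hornerXn expr1n. Qed.

Lemma Phi5p_1 : Phi5p.[1] = 5.
Proof. by rewrite /Phi5p !hornerE !expr1n. Qed.
Lemma Phi25p_1 : Phi25p.[1] = 5.
Proof. by rewrite /Phi25p !hornerE !expr1n. Qed.
Lemma P1_1 : P1.[1] = -1.
Proof. by rewrite /P1 !hornerE !expr1n. Qed.
Lemma P2_1 : P2.[1] = 1.
Proof. by rewrite /P2 !hornerE !expr1n. Qed.
Lemma X1_1 : (1 - 'X : {poly int}).[1] = 0.
Proof. by rewrite !hornerE subrr. Qed.

Lemma F1_1 h a k : (F1 h a k).[1] = 5 * ((a%:Z) ^+ 3 * h.[1] + k * 5).
Proof.
rewrite /F1 hornerD hornerM X1_1 Phi25p_1 hornerD hornerN hornerCM !hornerM.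
rewrite !Sa1 comp1 P1_1 Phi5p_1.
ring.
Qed.

Lemma F2_1 h a k : (F2 h a k).[1] = 5 * (- ((a%:Z) ^+ 3 * h.[1]) + k * 5).
Proof.
rewrite /F2 hornerD hornerM X1_1 Phi5p_1 hornerD hornerN hornerCM !hornerM.
rewrite !Sa1 comp1 P2_1 Phi25p_1.
ring.
Qed.

Lemma part1 (m : int) h (a : nat) : coprime a 5 ->
  (5 %| 1 - (a%:Z) ^+ 3 * h.[1])%Z ->
  m%:~R = Nk 1 (1 + ('X - 1) ^+ 3 * h) ->
  exists F : {poly int},
     [/\ M25 F = (5 ^+ 3 * m)%:~R, F.[1] = 5, Nk 2 F = 5 & Nk 1 F = (5 * m)%:~R].
Proof.
move=> co dv Hm.
set k := ((1 - (a%:Z) ^+ 3 * h.[1]) %/ 5)%Z.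
have hk : k * 5 = 1 - (a%:Z) ^+ 3 * h.[1] by rewrite divzK.
exists (F1 h a k).
have HF1 : (F1 h a k).[1] = 5 by rewrite F1_1 hk; ring.
have HN2 : NN 25 (omega 2) (evC (F1 h a k)) = 5.
  rewrite (@NN_eq 25 (omega 2) _ (fun y => 1 - y) prim_omega2).
    by rewrite NN_1sub ?Phi25_1 // prim_omega2.
  by move=> y py; apply: (E1b _ _ _ _ (prim25_facts _ py).2).
have HN1 : NN 5 (omega 1) (evC (F1 h a k)) = 5 * m%:~R.
  rewrite (@NN_eq 5 (omega 1) _ (fun y => (1 - y) * evC (Gp h) (y ^+ a)) prim_omega1);
    last first.
    by move=> y py; have [y5 H5] := prim5_facts _ py; apply: (E1a _ _ _ _ y5 H5).
  rewrite NN_mul NN_1sub ?prim_omega1 // Phi5_1.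
  by rewrite (@NN_reindex 5 (omega 1) a (evC (Gp h)) prim_omega1 co) -Nk1E -Hm.
split.
- by rewrite M25E HF1 HN1 HN2 rmorphM rmorphXn /=; ring.
- exact: HF1.
- by rewrite Nk2E.
- by rewrite Nk1E HN1 rmorphM.
Qed.

Lemma part2 (m : int) h (a : nat) : coprime a 25 ->
  (5 %| 1 + (a%:Z) ^+ 3 * h.[1])%Z ->
  m%:~R = Nk 2 (1 + ('X - 1) ^+ 3 * h) ->
  exists F : {poly int},
     [/\ M25 F = (5 ^+ 3 * m)%:~R, F.[1] = 5, Nk 1 F = 5 & Nk 2 F = (5 * m)%:~R].
Proof.
move=> co dv Hm.
set k := ((1 + (a%:Z) ^+ 3 * h.[1]) %/ 5)%Z.
have hk : k * 5 = 1 + (a%:Z) ^+ 3 * h.[1] by rewrite divzK.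
exists (F2 h a k).
have HF1 : (F2 h a k).[1] = 5 by rewrite F2_1 hk; ring.
have HN1 : NN 5 (omega 1) (evC (F2 h a k)) = 5.
  rewrite (@NN_eq 5 (omega 1) _ (fun y => 1 - y) prim_omega1).
    by rewrite NN_1sub ?Phi5_1 // prim_omega1.
  by move=> y py; apply: (E2b _ _ _ _ (prim5_facts _ py).2).
have HN2 : NN 25 (omega 2) (evC (F2 h a k)) = 5 * m%:~R.
  rewrite (@NN_eq 25 (omega 2) _ (fun y => (1 - y) * evC (Gp h) (y ^+ a)) prim_omega2);
    last first.
    by move=> y py; apply: (E2a _ _ _ _ (prim25_facts _ py).2).
  rewrite NN_mul NN_1sub ?prim_omega2 // Phi25_1.
  by rewrite (@NN_reindex 25 (omega 2) a (evC (Gp h)) prim_omega2 co) -Nk2E -Hm.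
split.
- by rewrite M25E HF1 HN1 HN2 rmorphM rmorphXn /=; ring.
- exact: HF1.
- by rewrite Nk1E.
- by rewrite Nk2E HN2 rmorphM.
Qed.

Lemma residue (x : int) : ~~ (5 %| x)%Z ->
  exists2 n : nat, (0 < n < 5)%N & x = (x %/ 5)%Z * 5 + n%:Z.
Proof.
move=> nd; set r := (x %% 5)%Z.
have Ex : x = (x %/ 5)%Z * 5 + r := divz_eq x 5.
have r0 : 0 <= r by apply: modz_ge0.
have r5 : r < 5 by apply: ltz_pmod.
have rn0 : r != 0 by apply: contra nd => /eqP /dvdz_mod0P.
exists (absz r); last by rewrite abszE ger0_norm.
apply/andP; split.
  by rewrite absz_gt0.
by rewrite -ltz_nat abszE ger0_norm.
Qed.

Theorem lemma3p4 (m : int) :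
  ((exists h : {poly int}, ~~ (5 %| h.[1])%Z /\
       m%:~R = Nk 1 (1 + ('X - 1) ^+ 3 * h)) ->
   exists F : {poly int},
     [/\ M25 F = (5 ^+ 3 * m)%:~R, F.[1] = 5, Nk 2 F = 5 & Nk 1 F = (5 * m)%:~R])
  /\
  ((exists h : {poly int}, ~~ (5 %| h.[1])%Z /\
       m%:~R = Nk 2 (1 + ('X - 1) ^+ 3 * h)) ->
   exists F : {poly int},
     [/\ M25 F = (5 ^+ 3 * m)%:~R, F.[1] = 5, Nk 1 F = 5 & Nk 2 F = (5 * m)%:~R]).
Proof.
split=> -[h [hd Hm]]; have [n /andP [n0 n5] Eh] := residue _ hd;
  set q := (h.[1] %/ 5)%Z in Eh.
- case: n n0 n5 Eh => [|[|[|[|[|n]]]]] // _ _ Eh.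
  + apply: (part1 _ _ 1 _ _ Hm) => //; rewrite Eh; apply/dvdzP.
    by exists (- q); ring.
  + apply: (part1 _ _ 2 _ _ Hm) => //; rewrite Eh; apply/dvdzP.
    by exists (- 8 * q - 3); ring.
  + apply: (part1 _ _ 3 _ _ Hm) => //; rewrite Eh; apply/dvdzP.
    by exists (- 27 * q - 16); ring.
  + apply: (part1 _ _ 4 _ _ Hm) => //; rewrite Eh; apply/dvdzP.
    by exists (- 64 * q - 51); ring.
- case: n n0 n5 Eh => [|[|[|[|[|n]]]]] // _ _ Eh.
  + apply: (part2 _ _ 4 _ _ Hm) => //; rewrite Eh; apply/dvdzP.
    by exists (64 * q + 13); ring.
  + apply: (part2 _ _ 3 _ _ Hm) => //; rewrite Eh; apply/dvdzP.
    by exists (27 * q + 11); ring.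
  + apply: (part2 _ _ 2 _ _ Hm) => //; rewrite Eh; apply/dvdzP.
    by exists (8 * q + 5); ring.
  + apply: (part2 _ _ 1 _ _ Hm) => //; rewrite Eh; apply/dvdzP.
    by exists (q + 1); ring.
Qed.
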